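(* Let $\mathcal{P}$ be a profile of unrooted phylogenetic trees whose display graph $G(\mathcal{P})$ is connected (so $\mathrm{LG}(\mathcal{P})$ is connected). If $F$ is a minimal separator of $\mathrm{LG}(\mathcal{P})$, then $\mathrm{LG}(\mathcal{P})-F$ has exactly two connected components.
   Context: A phylogenetic tree is an unrooted tree whose leaves are bijectively labeled (leaves identified with labels; internal vertices have degree at least three). A profile $\mathcal{P}=\{T_1,\dots,T_k\}$ is a finite collection of phylogenetic trees; internal vertices of distinct trees are disjoint, while leaves with the same label are the same vertex. The display graph $G(\mathcal{P})$ has vertex set $\bigcup_i V(T_i)$ and edge set $\bigcup_i E(T_i)$. $\mathrm{LG}(\mathcal{P})$ is the line graph of $G(\mathcal{P})$ (vertices are edges of $G(\mathcal{P})$, adjacent iff they share an endpoint). In a graph $G$, for nonadjacent vertices $a,b$, an $a$-$b$ separator is $U\subset V(G)$ with $a,b$ in different components of $G-U$; it is minimal if no proper subset is an $a$-$b$ separator; a minimal separator is a minimal $a$-$b$ separator for some nonadjacent $a,b$. *)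

(* Defs.v *)
From mathcomp Require Import all_boot.
Set Implicit Arguments.
Unset Strict Implicit.
Unset Printing Implicit Defensive.

Section Graphs.
Variable T : finType.

Definition restr (D : {set T}) (r : rel T) : rel T :=
  [rel x y | [&& x \in D, y \in D & r x y]].

Definition gconnected (D : {set T}) (r : rel T) : Prop :=
  forall x y, x \in D -> y \in D -> connect (restr D r) x y.

Definition components (D : {set T}) (r : rel T) : {set {set T}} :=
  [set [set y in D | connect (restr D r) x y] | x in D].

Definition is_ab_separator (D : {set T}) (r : rel T) (a b : T) (U : {set T}) : Prop :=
  [/\ U \subset D, a \in D :\: U, b \in D :\: U &
      ~~ connect (restr (D :\: U) r) a b].

Definition is_min_ab_separator (D : {set T}) (r : rel T) (a b : T) (U : {set T}) : Prop :=
  is_ab_separator D r a b U /\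
  forall U' : {set T}, U' \proper U -> ~ is_ab_separator D r a b U'.

Definition is_min_separator (D : {set T}) (r : rel T) (U : {set T}) : Prop :=
  exists a b, [/\ a \in D, b \in D, a != b, ~~ r a b & is_min_ab_separator D r a b U].
End Graphs.

Section Trees.
Variable V : finType.

(* adjacency given by a set of edges (edges are 2-element vertex sets) *)
Definition tadj (E : {set {set V}}) : rel V :=
  [rel x y | (x != y) && ([set x; y] \in E)].

Definition tdeg (E : {set {set V}}) (v : V) : nat := #|[set u | tadj E v u]|.

Definition is_tree (VT : {set V}) (E : {set {set V}}) : Prop :=
  [/\ VT != set0,
      (forall e, e \in E -> exists u v, [/\ u \in VT, v \in VT, u != v & e = [set u; v]]),
      gconnected VT (tadj E) &
      (forall c : seq V, uniq c -> 3 <= size c -> ~~ cycle (tadj E) c)].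

Definition is_leaf (E : {set {set V}}) (v : V) : bool := tdeg E v <= 1.

(* unrooted phylogenetic tree: leaves are the labels (so bijectively labeled),
   internal vertices have degree at least three *)
Definition is_phylo_tree (VT : {set V}) (E : {set {set V}}) : Prop :=
  is_tree VT E /\ (forall v, v \in VT -> ~~ is_leaf E v -> 3 <= tdeg E v).

(* profile of k trees sharing the vertex type V: a vertex common to two
   distinct trees must be a leaf (= the same label) in both *)
Definition is_profile (k : nat) (VT : 'I_k -> {set V}) (ET : 'I_k -> {set {set V}}) : Prop :=
  (forall i, is_phylo_tree (VT i) (ET i)) /\
  (forall i j v, i != j -> v \in VT i -> v \in VT j -> is_leaf (ET i) v && is_leaf (ET j) v).

Definition display_vertices (k : nat) (VT : 'I_k -> {set V}) : {set V} :=
  \bigcup_(i < k) VT i.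
Definition display_edges (k : nat) (ET : 'I_k -> {set {set V}}) : {set {set V}} :=
  \bigcup_(i < k) ET i.

Definition lgadj : rel {set V} := [rel e f | (e != f) && (e :&: f != set0)].
End Trees.

(* Main.v *)
Require Import Defs.
From mathcomp Require Import all_boot.
Set Implicit Arguments.
Unset Strict Implicit.

Section Aux.
Variable V : finType.

Lemma closure (T : finType) (e : rel T) (A : pred T) x y :
  (forall u v, e u v -> u \in A -> v \in A) -> connect e x y -> x \in A -> y \in A.
Proof.
move=> H /connectP [p pth ->] {y}; elim: p x pth => //= z p IH x /andP [exz pth] xA.
exact: IH pth (H _ _ exz xA).
Qed.

Lemma restr_in (T : finType) (S : {set T}) (r : rel T) x y :
  connect (restr S r) x y -> x \in S -> y \in S.
Proof.
move=> c xS; have := closure (A := [pred z | z \in S]) _ c.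
rewrite !inE; apply => //; move=> u v /and3P [_ vS _] _; by rewrite inE.
Qed.

Lemma restr_sym (T : finType) (S : {set T}) (r : rel T) :
  symmetric r -> symmetric (restr S r).
Proof. move=> s x y; rewrite /restr /= s andbA (andbC (x \in S)) -andbA. by []. Qed.

Lemma lgadj_sym : symmetric (@lgadj V).
Proof. by move=> e f; rewrite /lgadj /= eq_sym setIC. Qed.

Lemma csym (S : {set {set V}}) x y :
  connect (restr S (@lgadj V)) x y = connect (restr S (@lgadj V)) y x.
Proof. exact/sym_connect_sym/restr_sym/lgadj_sym. Qed.

Lemma share (S : {set {set V}}) e g w :
  e \in S -> g \in S -> w \in e -> w \in g -> connect (restr S (@lgadj V)) e g.
Proof.
move=> eS gS we wg; have [->|neq] := eqVneq e g; first exact: connect0.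
apply: connect1; rewrite /restr /lgadj /= eS gS neq /=; apply/set0Pn; exists w; by rewrite inE we wg.
Qed.

Lemma meet2 c u v : @lgadj V c [set u; v] -> (u \in c) || (v \in c).
Proof.
move=> /andP[_ /set0Pn [w]]; rewrite !inE => /andP [wc /orP [/eqP E|/eqP E]];
  by rewrite -E wc ?orbT.
Qed.

Lemma sep_sym (D : {set {set V}}) a b U :
  is_ab_separator D (@lgadj V) a b U -> is_ab_separator D (@lgadj V) b a U.
Proof. move=> [H1 H2 H3 H4]; split => //; by rewrite csym. Qed.

Lemma min_nbr (D F : {set {set V}}) a b f :
  F \subset D -> a \in D :\: F -> b \in D :\: F ->
  ~~ connect (restr (D :\: F) (@lgadj V)) a b ->
  (forall U' : {set {set V}}, U' \proper F -> ~ is_ab_separator D (@lgadj V) a b U') -> f \in F ->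
  exists2 g, connect (restr (D :\: F) (@lgadj V)) a g & lgadj g f.
Proof.
move=> FD aD bD nab Hmin fF.
case: (boolP [exists g, connect (restr (D:\:F) (@lgadj V)) a g && lgadj g f]).
  by move=> /existsP[g /andP[]]; exists g.
move=> /existsPn Hn; exfalso; apply: (Hmin (F :\ f)); first by rewrite properD1.
split.
- by apply: subset_trans FD; exact: subD1set.
- by move: aD; rewrite !inE => /andP[aF ->]; rewrite (negbTE aF) andbF.
- by move: bD; rewrite !inE => /andP[aF ->]; rewrite (negbTE aF) andbF.
apply/negP => C.
have: b \in [pred y | connect (restr (D:\:F) (@lgadj V)) a y].
  apply: (closure _ C); last by rewrite inE connect0.
  move=> u v /and3P[_ vD uv]; rewrite !inE => au.
  have uD' := restr_in au aD.
  case vF: (v \in F).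
    move: vD; rewrite !inE vF andbT => /andP [/negPn /eqP vf _].
    by move: (Hn u); rewrite au -vf uv.
  apply: connect_trans au (connect1 _); rewrite /restr /= uD' uv andbT !inE vF /=; by move: vD; rewrite !inE => /andP[_ ->].
by rewrite inE (negbTE nab).
Qed.

Lemma edge_form k (VT : 'I_k -> {set V}) (ET : 'I_k -> {set {set V}}) e :
  is_profile VT ET -> e \in display_edges ET ->
  exists u v, [/\ u \in display_vertices VT, v \in display_vertices VT, u != v
     & e = [set u; v]].
Proof.
move=> [Hp _] /bigcupP [i _ ei]. have [[_ He _ _] _] := Hp i.
have [u [v [uV vV uv ->]]] := He e ei.
by exists u, v; split => //; apply/bigcupP; exists i.
Qed.

Lemma lg_conn k (VT : 'I_k -> {set V}) (ET : 'I_k -> {set {set V}}) e1 e2 :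
  is_profile VT ET ->
  gconnected (display_vertices VT) (tadj (display_edges ET)) ->
  e1 \in display_edges ET -> e2 \in display_edges ET ->
  connect (restr (display_edges ET) (@lgadj V)) e1 e2.
Proof.
move=> HP Gc e1E e2E.
have [u1 [v1 [u1V _ _ De1]]] := edge_form HP e1E.
have [u2 [v2 [u2V _ _ De2]]] := edge_form HP e2E.
set E := display_edges ET.
pose A := [pred y | [exists e', [&& e' \in E, y \in e'
          & connect (restr E (@lgadj V)) e1 e']]].
have : u2 \in A.
  apply: (closure _ (Gc _ _ u1V u2V)).
  - move=> u v /and3P[_ _ /andP [_ gE]]; rewrite !inE => /existsP [e' /and3P [e'E ue' c']].
    apply/existsP; exists [set u; v]; rewrite gE !inE eqxx orbT /=.
    apply: connect_trans c' (share e'E gE ue' _); by rewrite !inE eqxx.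
  - by rewrite inE; apply/existsP; exists e1; rewrite e1E De1 !inE eqxx connect0.
rewrite inE => /existsP [e' /and3P [e'E ue' c']].
apply: connect_trans c' (share e'E e2E ue' _).
by rewrite De2 !inE eqxx.
Qed.
End Aux.

Theorem lemma4 (V : finType) (k : nat) (VT : 'I_k -> {set V})
    (ET : 'I_k -> {set {set V}}) :
  is_profile VT ET ->
  gconnected (display_vertices VT) (tadj (display_edges ET)) ->
  forall F : {set {set V}},
    is_min_separator (display_edges ET) (@lgadj V) F ->
    #|components (display_edges ET :\: F) (@lgadj V)| = 2.
Proof.
move=> HP Gc F [a [b [aD bD ab nab [[FD aD' bD' nconn] Hmin]]]].
set D := display_edges ET in FD aD bD aD' bD' nconn Hmin *.
set D' := D :\: F in aD' bD' nconn *.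
have D'D : forall x, x \in D' -> x \in D by move=> x; rewrite !inE => /andP[].
have compE : forall x y, connect (restr D' (@lgadj V)) x y ->
    [set z in D' | connect (restr D' (@lgadj V)) x z] =
    [set z in D' | connect (restr D' (@lgadj V)) y z].
  move=> x y xy; apply/setP=> z; rewrite !in_set; congr (_ && _).
  apply/idP/idP => H; first by rewrite csym in xy; exact: connect_trans xy H.
  exact: connect_trans xy H.
have ga := min_nbr FD aD' bD' nconn Hmin.
have gb : forall f, f \in F ->
    exists2 g, connect (restr D' (@lgadj V)) b g & lgadj g f.
  move=> f fF; apply: (min_nbr FD bD' aD' _ _ fF); first by rewrite csym.
  by move=> U' pU' /sep_sym; apply: Hmin.
have key : forall x, x \in D' ->
    connect (restr D' (@lgadj V)) x a || connect (restr D' (@lgadj V)) x b.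
  move=> x xD; apply/negPn/negP => /norP[nxa nxb].
  case: (boolP [exists c, exists f, [&& connect (restr D' (@lgadj V)) x c,
                 f \in F & lgadj c f]]); last first.
    move=> /existsPn Hn.
    have : a \in [pred y | connect (restr D' (@lgadj V)) x y].
      apply: (closure _ (lg_conn HP Gc (D'D _ xD) aD)).
      - move=> u v /and3P[uD vD uv]; rewrite !inE => xu.
        case vF: (v \in F).
          by move: (Hn u) => /existsPn /(_ v); rewrite xu vF uv.
        have uD' := restr_in xu xD.
        apply: connect_trans xu (connect1 _).
        by rewrite /restr /= uD' !inE vF vD uv.
      - by rewrite inE connect0.
    by rewrite inE (negbTE nxa).
  move=> /existsP[c /existsP[f /and3P[xc fF cf]]].
  have [g1 ag1 g1f] := ga f fF.
  have [g2 bg2 g2f] := gb f fF.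
  have cD := restr_in xc xD.
  have g1D := restr_in ag1 aD'.
  have g2D := restr_in bg2 bD'.
  have [u [v [_ _ _ Df]]] := edge_form HP (subsetP FD f fF).
  rewrite Df in cf g1f g2f.
  have P1 : forall w, w \in c -> w \in g1 -> False.
    move=> w wc wg; move/negP: nxa; apply.
    apply: connect_trans xc (connect_trans (share cD g1D wc wg) _); by rewrite csym.
  have P2 : forall w, w \in c -> w \in g2 -> False.
    move=> w wc wg; move/negP: nxb; apply.
    apply: connect_trans xc (connect_trans (share cD g2D wc wg) _); by rewrite csym.
  have P3 : forall w, w \in g1 -> w \in g2 -> False.
    move=> w w1 w2; move/negP: nconn; apply.
    apply: connect_trans ag1 (connect_trans (share g1D g2D w1 w2) _); by rewrite csym.
  case/orP: (meet2 cf) => wc; case/orP: (meet2 g1f) => w1; case/orP: (meet2 g2f) => w2;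
    first [exact: P1 wc w1 | exact: P2 wc w2 | exact: P3 w1 w2].
have -> : components D' (@lgadj V) =
   [set [set z in D' | connect (restr D' (@lgadj V)) a z];
        [set z in D' | connect (restr D' (@lgadj V)) b z]].
  apply/setP => C; rewrite in_set2; apply/imsetP/orP.
    move=> [x xD ->]; case/orP: (key x xD) => H; [left|right]; apply/eqP; exact: compE.
  by case=> /eqP ->; [exists a | exists b].
rewrite cards2; case: eqP => // E; exfalso.
have : b \in [set z in D' | connect (restr D' (@lgadj V)) b z] by rewrite inE bD' connect0.
by rewrite -E inE (negbTE nconn) andbF.
Qed.
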